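(* Let $\mathfrak{stl}_3(R)^\sharp$ be the Leibniz algebra over $K$ generated by symbols $X^\sharp_{ij}(a)$ ($a\in R$, $1\le i\ne j\le 3$) and the $K$-module $\mathcal U$, subject to: $X^\sharp_{ij}$ is $K$-linear in $a$; $[X^\sharp_{ij}(a),X^\sharp_{jk}(b)]=-[X^\sharp_{jk}(b),X^\sharp_{ij}(a)]=X^\sharp_{ik}(ab)$ for distinct $i,j,k$; $[X^\sharp_{ij}(a),\mathcal U]=0=[\mathcal U,X^\sharp_{ij}(a)]$; $[X^\sharp_{ij}(a),X^\sharp_{ij}(b)]=0$; $[X^\sharp_{ij}(a),X^\sharp_{ik}(b)]=\mathrm{sign}(j,k)(\overline{ab})^{(i)}$ and $[X^\sharp_{ij}(a),X^\sharp_{kj}(b)]=\mathrm{sign}(i,k)(\overline{ab})^{(-j)}$ for distinct $i,j,k$. Let $\widehat{\mathfrak{stl}}_3(R)=\mathcal U\oplus\mathfrak{stl}_3(R)$ with bracket $[(c,x),(c',y)]=(\psi(x,y),[x,y])$. Then the unique Leibniz algebra homomorphism $\rho:\mathfrak{stl}_3(R)^\sharp\to\widehat{\mathfrak{stl}}_3(R)$ with $\rho(X^\sharp_{ij}(a))=(0,X_{ij}(a))$ and $\rho(u)=(u,0)$ for $u\in\mathcal U$ is an isomorphism.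
   Context: $K$ unital commutative ring, $R$ unital associative $K$-algebra, free as $K$-module with basis containing $1$. Leibniz algebra: $K$-bilinear bracket with $[x,[y,z]]=[[x,y],z]-[[x,z],y]$. $\mathfrak{stl}_3(R)$: Leibniz algebra over $K$ generated by $X_{ij}(a)$, $a\in R$, $1\le i\ne j\le 3$, subject to $K$-linearity in $a$, $[X_{ij}(a),X_{jk}(b)]=X_{ik}(ab)$ and $[X_{ij}(a),X_{ki}(b)]=-X_{kj}(ba)$ for distinct $i,j,k$, $[X_{ij}(a),X_{kl}(b)]=0$ for $j\ne k$, $i\ne l$. $H$ is the $K$-span of all $[X_{ij}(a),X_{ji}(b)]$; $\mathfrak{stl}_3(R)=H\oplus\bigoplus_{i\ne j}X_{ij}(R)$ with $a\mapsto X_{ij}(a)$ injective. $R_3=R/(3R+R[R,R])$, $\bar a$ the class of $a$. $\mathcal U=R_3^6$ with coordinates indexed by $\{1,2,3,-1,-2,-3\}$; $\bar a^{(m)}$ is the element with coordinate $\bar a$ at index $m$, $0$ elsewhere. $\mathrm{sign}(m,n)=1$ if $m<n$, $-1$ if $m>n$. $\psi$ is the $K$-bilinear map with $\psi(X_{ij}(a),X_{ik}(b))=\mathrm{sign}(j,k)(\overline{ab})^{(i)}$, $\psi(X_{ij}(a),X_{kj}(b))=\mathrm{sign}(i,k)(\overline{ab})^{(-j)}$ for distinct $i,j,k$, $\psi=0$ on all other pairs $X_{ij}(a),X_{kl}(b)$ and whenever an argument lies in $H$; it is a Leibniz 2-cocycle. *)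

(* Defs.v *)
From HB Require Import structures.
From mathcomp Require Import all_boot all_order all_algebra.
Set Implicit Arguments. Unset Strict Implicit. Unset Printing Implicit Defensive.
Import GRing.Theory.
Local Open Scope ring_scope.

Section LeibnizDefs.
Variable K : comPzRingType.

Definition klinear (V W : lmodType K) (f : V -> W) :=
  forall (k : K) (x y : V), f (k *: x + y) = k *: f x + f y.

Definition kbilinear (V W : lmodType K) (br : V -> V -> W) :=
  (forall k x y z, br (k *: x + y) z = k *: br x z + br y z) /\
  (forall k x y z, br x (k *: y + z) = k *: br x y + br x z).

Definition leibniz (L : lmodType K) (br : L -> L -> L) :=
  kbilinear br /\ forall x y z, br x (br y z) = br (br x y) z - br (br x z) y.

Definition leibniz_hom (L M : lmodType K) (brL : L -> L -> L) (brM : M -> M -> M)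
  (f : L -> M) := klinear f /\ forall x y, f (brL x y) = brM (f x) (f y).

(* indices 1,2,3 are represented by 'I_3 = {0,1,2} (order preserved) *)
Definition distinct3 (i j k : 'I_3) := [&& i != j, j != k & i != k].

Definition free_with_one (R : algType K) :=
  exists (I : eqType) (e : I -> R) (i1 : I), e i1 = 1 /\
   (forall (s : seq I) (c : I -> K), uniq s ->
       \sum_(i <- s) c i *: e i = 0 -> forall i, i \in s -> c i = 0) /\
   (forall x : R, exists (s : seq I) (c : I -> K), x = \sum_(i <- s) c i *: e i).

(* x lies in 3R + R[R,R] *)
Definition in_ideal3 (R : algType K) (x : R) :=
  exists (r0 : R) (l : seq (R * R * R)),
    x = r0 *+ 3 + \sum_(p <- l) p.1.1 * (p.1.2 * p.2 - p.2 * p.1.2).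

(* (Q, pi) is the quotient R_3 = R/(3R + R[R,R]) with pi a = class of a *)
Definition is_R3 (R : algType K) (Q : lmodType K) (pi : R -> Q) :=
  klinear pi /\ (forall q : Q, exists a, pi a = q) /\
  (forall a, pi a = 0 <-> in_ideal3 a).

(* coordinate index of U = R_3^6: (true,i) is index i, (false,j) is index -j *)
Definition Uidx := (bool * 'I_3)%type.

Definition unitU (R : algType K) (Q : lmodType K) (pi : R -> Q) (a : R) (m : Uidx)
  : {ffun Uidx -> Q} := [ffun p => if p == m then pi a else 0].

Definition sgn (V : zmodType) (m n : 'I_3) (u : V) : V := if (m < n)%N then u else - u.

Definition stl_rels (R : algType K) (M : lmodType K) (br : M -> M -> M)
  (Y : 'I_3 -> 'I_3 -> R -> M) :=
  (forall i j, i != j -> klinear (Y i j)) /\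
  (forall i j k a b, distinct3 i j k -> br (Y i j a) (Y j k b) = Y i k (a * b)) /\
  (forall i j k a b, distinct3 i j k -> br (Y i j a) (Y k i b) = - Y k j (b * a)) /\
  (forall i j k l a b, i != j -> k != l -> j != k -> i != l ->
      br (Y i j a) (Y k l b) = 0).

Definition is_stl3 (R : algType K) (L : lmodType K) (br : L -> L -> L)
  (X : 'I_3 -> 'I_3 -> R -> L) :=
  leibniz br /\ stl_rels br X /\
  forall (M : lmodType K) (brM : M -> M -> M) (Y : 'I_3 -> 'I_3 -> R -> M),
    leibniz brM -> stl_rels brM Y ->
    exists f : L -> M, (leibniz_hom br brM f /\ forall i j a, i != j -> f (X i j a) = Y i j a)
      /\ forall g : L -> M, leibniz_hom br brM g ->
           (forall i j a, i != j -> g (X i j a) = Y i j a) -> forall x, g x = f x.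

(* defining relations of stl_3(R)^sharp; kap is the image of the generating module U *)
Definition stlsharp_rels (R : algType K) (Q : lmodType K) (pi : R -> Q)
  (M : lmodType K) (br : M -> M -> M) (Y : 'I_3 -> 'I_3 -> R -> M)
  (kap : {ffun Uidx -> Q} -> M) :=
  (forall i j, i != j -> klinear (Y i j)) /\ klinear kap /\
  (forall i j k a b, distinct3 i j k ->
      br (Y i j a) (Y j k b) = Y i k (a * b) /\ br (Y j k b) (Y i j a) = - Y i k (a * b)) /\
  (forall i j a u, i != j -> br (Y i j a) (kap u) = 0 /\ br (kap u) (Y i j a) = 0) /\
  (forall i j a b, i != j -> br (Y i j a) (Y i j b) = 0) /\
  (forall i j k a b, distinct3 i j k ->
      br (Y i j a) (Y i k b) = kap (sgn j k (unitU pi (a * b) (true, i)))) /\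
  (forall i j k a b, distinct3 i j k ->
      br (Y i j a) (Y k j b) = kap (sgn i k (unitU pi (a * b) (false, j)))).

Definition is_stl3sharp (R : algType K) (Q : lmodType K) (pi : R -> Q)
  (S : lmodType K) (br : S -> S -> S) (Xs : 'I_3 -> 'I_3 -> R -> S)
  (iota : {ffun Uidx -> Q} -> S) :=
  leibniz br /\ stlsharp_rels pi br Xs iota /\
  forall (M : lmodType K) (brM : M -> M -> M) (Y : 'I_3 -> 'I_3 -> R -> M)
         (kap : {ffun Uidx -> Q} -> M),
    leibniz brM -> stlsharp_rels pi brM Y kap ->
    exists f : S -> M,
      (leibniz_hom br brM f /\ (forall i j a, i != j -> f (Xs i j a) = Y i j a)
        /\ forall u, f (iota u) = kap u)
      /\ forall g : S -> M, leibniz_hom br brM g ->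
           (forall i j a, i != j -> g (Xs i j a) = Y i j a) ->
           (forall u, g (iota u) = kap u) -> forall x, g x = f x.

(* the cocycle psi : stl_3(R) x stl_3(R) -> U, as described in the context
   (bilinear, given values on generator pairs, zero on H), plus the stated
   Leibniz 2-cocycle identity (central, trivial action) *)
Definition is_psi (R : algType K) (L : lmodType K) (br : L -> L -> L)
  (X : 'I_3 -> 'I_3 -> R -> L) (Q : lmodType K) (pi : R -> Q)
  (psi : L -> L -> {ffun Uidx -> Q}) :=
  kbilinear psi /\
  (forall i j k a b, distinct3 i j k ->
      psi (X i j a) (X i k b) = sgn j k (unitU pi (a * b) (true, i))) /\
  (forall i j k a b, distinct3 i j k ->
      psi (X i j a) (X k j b) = sgn i k (unitU pi (a * b) (false, j))) /\
  (forall i j k l a b, i != j -> k != l ->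
      ~~ ((i == k) && (j != l)) -> ~~ ((j == l) && (i != k)) ->
      psi (X i j a) (X k l b) = 0) /\
  (forall i j a b y, i != j ->
      psi (br (X i j a) (X j i b)) y = 0 /\ psi y (br (X i j a) (X j i b)) = 0) /\
  (forall x y z, psi x (br y z) = psi (br x y) z - psi (br x z) y).

Definition hatbr (L : lmodType K) (Q : lmodType K) (br : L -> L -> L)
  (psi : L -> L -> {ffun Uidx -> Q})
  (p q : ({ffun Uidx -> Q} * L)%type) : ({ffun Uidx -> Q} * L)%type :=
  (psi p.2 q.2, br p.2 q.2).

Definition rho_spec (R : algType K) (Q : lmodType K) (L S : lmodType K)
  (brL : L -> L -> L) (X : 'I_3 -> 'I_3 -> R -> L) (psi : L -> L -> {ffun Uidx -> Q})
  (brS : S -> S -> S) (Xs : 'I_3 -> 'I_3 -> R -> S) (iota : {ffun Uidx -> Q} -> S)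
  (rho : S -> ({ffun Uidx -> Q} * L)%type) :=
  leibniz_hom brS (hatbr brL psi) rho /\
  (forall i j a, i != j -> rho (Xs i j a) = (0, X i j a)) /\
  (forall u, rho (iota u) = (u, 0)).

End LeibnizDefs.

(* Main.v *)
Require Import Defs.
From HB Require Import structures.
From mathcomp Require Import all_boot all_order all_algebra.
Import GRing.Theory.
Local Open Scope ring_scope.
Set Implicit Arguments. Unset Strict Implicit.

Lemma klin0 (K : comPzRingType) (V W : lmodType K) (f : V -> W) : klinear f -> f 0 = 0.
Proof.
move=> hf; have h := hf 1 0 0; rewrite scaler0 add0r scale1r in h.
by apply: (@addrI _ (f 0)); rewrite addr0 -h.
Qed.
Lemma klinD (K : comPzRingType) (V W : lmodType K) (f : V -> W) : klinear f ->
  forall x y, f (x + y) = f x + f y.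
Proof. by move=> hf x y; rewrite -[x]scale1r hf !scale1r. Qed.
Lemma klinZ (K : comPzRingType) (V W : lmodType K) (f : V -> W) : klinear f ->
  forall k x, f (k *: x) = k *: f x.
Proof. by move=> hf k x; rewrite -[k *: x]addr0 hf klin0 // addr0. Qed.
Lemma klinN (K : comPzRingType) (V W : lmodType K) (f : V -> W) : klinear f ->
  forall x, f (- x) = - f x.
Proof. by move=> hf x; rewrite -scaleN1r klinZ // scaleN1r. Qed.
Lemma klinB (K : comPzRingType) (V W : lmodType K) (f : V -> W) : klinear f ->
  forall x y, f (x - y) = f x - f y.
Proof. by move=> hf x y; rewrite klinD // klinN. Qed.
Lemma klin_sum (K : comPzRingType) (V W : lmodType K) (f : V -> W) : klinear f ->
  forall (I : Type) (s : seq I) (F : I -> V), f (\sum_(i <- s) F i) = \sum_(i <- s) f (F i).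
Proof.
move=> hf I s F; elim: s => [|x s IH]; first by rewrite !big_nil klin0.
by rewrite !big_cons klinD // IH.
Qed.

Lemma bil_l (K : comPzRingType) (V W : lmodType K) (br : V -> V -> W) :
  kbilinear br -> forall z, klinear (fun x => br x z).
Proof. by move=> hb z k x y; apply: hb.1. Qed.
Lemma bil_r (K : comPzRingType) (V W : lmodType K) (br : V -> V -> W) :
  kbilinear br -> forall x, klinear (br x).
Proof. by move=> hb x k y z; apply: hb.2. Qed.


Lemma br0l (K : comPzRingType) (V W : lmodType K) (br : V -> V -> W) :
  kbilinear br -> forall z, br 0 z = 0.
Proof. by move=> hb z; exact (klin0 (bil_l hb z)). Qed.
Lemma br0r (K : comPzRingType) (V W : lmodType K) (br : V -> V -> W) :
  kbilinear br -> forall z, br z 0 = 0.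
Proof. by move=> hb z; exact (klin0 (bil_r hb z)). Qed.
Lemma brDl (K : comPzRingType) (V W : lmodType K) (br : V -> V -> W) :
  kbilinear br -> forall x y z, br (x + y) z = br x z + br y z.
Proof. by move=> hb x y z; exact (klinD (bil_l hb z) x y). Qed.
Lemma brDr (K : comPzRingType) (V W : lmodType K) (br : V -> V -> W) :
  kbilinear br -> forall x y z, br z (x + y) = br z x + br z y.
Proof. by move=> hb x y z; exact (klinD (bil_r hb z) x y). Qed.
Lemma brBl (K : comPzRingType) (V W : lmodType K) (br : V -> V -> W) :
  kbilinear br -> forall x y z, br (x - y) z = br x z - br y z.
Proof. by move=> hb x y z; exact (klinB (bil_l hb z) x y). Qed.
Lemma brBr (K : comPzRingType) (V W : lmodType K) (br : V -> V -> W) :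
  kbilinear br -> forall x y z, br z (x - y) = br z x - br z y.
Proof. by move=> hb x y z; exact (klinB (bil_r hb z) x y). Qed.
Lemma brNl (K : comPzRingType) (V W : lmodType K) (br : V -> V -> W) :
  kbilinear br -> forall x z, br (- x) z = - br x z.
Proof. by move=> hb x z; exact (klinN (bil_l hb z) x). Qed.
Lemma brNr (K : comPzRingType) (V W : lmodType K) (br : V -> V -> W) :
  kbilinear br -> forall x z, br z (- x) = - br z x.
Proof. by move=> hb x z; exact (klinN (bil_r hb z) x). Qed.
Lemma brZl (K : comPzRingType) (V W : lmodType K) (br : V -> V -> W) :
  kbilinear br -> forall k x z, br (k *: x) z = k *: br x z.
Proof. by move=> hb k x z; exact (klinZ (bil_l hb z) k x). Qed.
Lemma brZr (K : comPzRingType) (V W : lmodType K) (br : V -> V -> W) :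
  kbilinear br -> forall k x z, br z (k *: x) = k *: br z x.
Proof. by move=> hb k x z; exact (klinZ (bil_r hb z) k x). Qed.

Lemma leibA (K : comPzRingType) (V : lmodType K) (br : V -> V -> V) :
  leibniz br -> forall x y z, br (br x y) z = br x (br y z) + br (br x z) y.
Proof. by move=> [_ h] x y z; rewrite h subrK. Qed.

Lemma I3_4 (i j k l : 'I_3) : i != j -> k != i -> k != j -> l != k -> l != i -> l != j -> False.
Proof.
by move: i j k l => [[|[|[|?]]] ?] [[|[|[|?]]] ?] [[|[|[|?]]] ?] [[|[|[|?]]] ?].
Qed.
Inductive zexp := ZAt of nat | ZAdd of zexp & zexp | ZOpp of zexp | ZSub of zexp & zexp.
Fixpoint zeval (V : zmodType) (env : seq V) (e : zexp) : V :=
  match e with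
  | ZAt n => nth 0 env n
  | ZAdd a b => zeval env a + zeval env b
  | ZOpp a => - zeval env a
  | ZSub a b => zeval env a - zeval env b
  end.
Fixpoint zaddl (c d : seq int) : seq int :=
  match c, d with
  | [::], _ => d
  | _, [::] => c
  | x :: c', y :: d' => (x + y) :: zaddl c' d'
  end.
Fixpoint zat (n : nat) : seq int := if n is n'.+1 then 0 :: zat n' else [:: 1].
Fixpoint znorm (e : zexp) : seq int :=
  match e with
  | ZAt n => zat n
  | ZAdd a b => zaddl (znorm a) (znorm b)
  | ZOpp a => map (fun x => - x) (znorm a)
  | ZSub a b => zaddl (znorm a) (map (fun x => - x) (znorm b))
  end.
Fixpoint zevc (V : zmodType) (env : seq V) (c : seq int) : V :=
  match env, c with
  | x :: env', y :: c' => x *~ y + zevc env' c'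
  | _, _ => 0
  end.
Lemma zevc_add (V : zmodType) (env : seq V) c d : zevc env (zaddl c d) = zevc env c + zevc env d.
Proof.
elim: env c d => [|x env IH] [|y c] [|z d] //=; rewrite ?addr0 ?add0r //.
by rewrite IH mulrzDr addrACA.
Qed.
Lemma zevc_opp (V : zmodType) (env : seq V) c : zevc env (map (fun x => - x) c) = - zevc env c.
Proof.
elim: env c => [|x env IH] [|y c] //=; rewrite ?oppr0 //.
by rewrite IH mulrNz opprD.
Qed.
Lemma zevc_at (V : zmodType) (env : seq V) n : zevc env (zat n) = nth 0 env n.
Proof.
elim: n env => [|n IH] [|x env] //=; first by case: env => [|? ?]; rewrite /= addr0.
by rewrite IH mulr0z add0r.
Qed.
Lemma zeval_norm (V : zmodType) (env : seq V) e : zeval env e = zevc env (znorm e).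
Proof.
elim: e => [n|a IHa b IHb|a IHa|a IHa b IHb] /=.
- by rewrite zevc_at.
- by rewrite zevc_add IHa IHb.
- by rewrite zevc_opp IHa.
- by rewrite zevc_add zevc_opp IHa IHb.
Qed.
Lemma zevc0 (V : zmodType) (env : seq V) c : all (fun x => x == 0) c -> zevc env c = 0.
Proof.
elim: env c => [|x env IH] [|y c] //= /andP[/eqP -> /IH ->]; by rewrite mulr0z addr0.
Qed.
Lemma zsolve (V : zmodType) (env : seq V) e1 e2 :
  all (fun x => x == 0) (znorm (ZSub e1 e2)) -> zeval env e1 = zeval env e2.
Proof.
move=> h; apply/eqP; rewrite -subr_eq0; apply/eqP.
by have := zeval_norm env (ZSub e1 e2) => /= ->; rewrite zevc0.
Qed.

Lemma zid1 (V : zmodType) (P Q R T U W : V) : (P - Q) - (R - T) = ((P - U) - (W - T)) - ((Q - W) - (U - R)).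
Proof.
exact: (@zsolve V [:: P; Q; R; T; U; W]
  (ZSub (ZSub (ZAt 0) (ZAt 1)) (ZSub (ZAt 2) (ZAt 3)))
  (ZSub (ZSub (ZSub (ZAt 0) (ZAt 4)) (ZSub (ZAt 5) (ZAt 3))) (ZSub (ZSub (ZAt 1) (ZAt 5)) (ZSub (ZAt 4) (ZAt 2))))).
Qed.
Lemma zid2 (V : zmodType) (a b c d : V) : (a + b) - (c + d) = (a - c) + (b - d).
Proof.
exact: (@zsolve V [:: a; b; c; d] (ZSub (ZAdd (ZAt 0) (ZAt 1)) (ZAdd (ZAt 2) (ZAt 3)))
  (ZAdd (ZSub (ZAt 0) (ZAt 2)) (ZSub (ZAt 1) (ZAt 3)))).
Qed.

Lemma zid4 (V : zmodType) (A B E F : V) : (A - B) - (E - F) = (A - E) - (B - F).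
Proof.
exact: (@zsolve V [:: A; B; E; F]
  (ZSub (ZSub (ZAt 0) (ZAt 1)) (ZSub (ZAt 2) (ZAt 3)))
  (ZSub (ZSub (ZAt 0) (ZAt 2)) (ZSub (ZAt 1) (ZAt 3)))).
Qed.

Lemma hat_leib (K : comPzRingType) (L Q : lmodType K) (brL : L -> L -> L)
  (psi : L -> L -> {ffun Uidx -> Q}) : leibniz brL -> kbilinear psi ->
  (forall x y z, psi x (brL y z) = psi (brL x y) z - psi (brL x z) y) ->
  leibniz (hatbr brL psi).
Proof.
move=> [[hl hr] hj] [pl pr] pc; split; first split.
- by move=> k x y z; rewrite /hatbr /= hl pl.
- by move=> k x y z; rewrite /hatbr /= hr pr.
- by move=> x y z; rewrite /hatbr /= hj pc.
Qed.

Definition lbr (K : comPzRingType) (V : lmodType K) (br : V -> V -> V) (p q : V * V) : V * V :=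
  (br p.1 q.1, br p.2 q.1 - br q.2 p.1).
Definition rbr (K : comPzRingType) (V : lmodType K) (br : V -> V -> V) (p q : V * V) : V * V :=
  (br p.1 q.1, br p.2 q.1 + br p.1 q.2).

Lemma lbr_leib (K : comPzRingType) (V : lmodType K) (br : V -> V -> V) :
  leibniz br -> leibniz (lbr br).
Proof.
move=> hb; have [[hl hr] hj] := hb; have hbb := hb.1.
split; first split.
- move=> k x y z; rewrite /lbr /=; congr pair; first exact: hl.
  by rewrite hl (brDr hbb) (brZr hbb) /= scalerBr zid2.
- move=> k x y z; rewrite /lbr /=; congr pair; first exact: hr.
  by rewrite hr (brDl hbb) (brZl hbb) /= scalerBr zid2.
- move=> [a b] [a' b'] [a'' b'']; rewrite /lbr /=; congr pair; first exact: hj.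
  rewrite !(brBl hbb) (hj b a' a'') (hj b'' a a') (hj b' a a'').
  by rewrite /=; exact: zid1.
Qed.
Lemma zid3 (V : zmodType) (P1 Q1 P2 Q2 P3 Q3 : V) :
  (P1 - Q1) + ((P2 - Q2) + (P3 - Q3)) = ((P1 + P2) + P3) - ((Q1 + Q3) + Q2).
Proof.
exact: (@zsolve V [:: P1; Q1; P2; Q2; P3; Q3]
  (ZAdd (ZSub (ZAt 0) (ZAt 1)) (ZAdd (ZSub (ZAt 2) (ZAt 3)) (ZSub (ZAt 4) (ZAt 5))))
  (ZSub (ZAdd (ZAdd (ZAt 0) (ZAt 2)) (ZAt 4)) (ZAdd (ZAdd (ZAt 1) (ZAt 5)) (ZAt 3)))).
Qed.

Lemma rbr_leib (K : comPzRingType) (V : lmodType K) (br : V -> V -> V) :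
  leibniz br -> leibniz (rbr br).
Proof.
move=> hb; have [[hl hr] hj] := hb; have hbb := hb.1.
split; first split.
- move=> k x y z; rewrite /rbr /=; congr pair; first exact: hl.
  by rewrite !hl /= scalerDr addrACA.
- move=> k x y z; rewrite /rbr /=; congr pair; first exact: hr.
  by rewrite !hr /= scalerDr addrACA.
- move=> [a b] [a' b'] [a'' b'']; rewrite /rbr /=; congr pair; first exact: hj.
  rewrite !(brDl hbb) !(brDr hbb) (hj b a' a'') (hj a b' a'') (hj a a' b'').
  by rewrite /=; exact: zid3.
Qed.

Lemma transp_sharp (K : comPzRingType) (R : algType K) (Q : lmodType K) (pi : R -> Q)
  (S M : lmodType K) (brS : S -> S -> S) (brM : M -> M -> M)
  (Xs : 'I_3 -> 'I_3 -> R -> S) (iota : {ffun Uidx -> Q} -> S) (e : S -> M) :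
  leibniz_hom brS brM e -> stlsharp_rels pi brS Xs iota ->
  stlsharp_rels pi brM (fun i j a => e (Xs i j a)) (fun u => e (iota u)).
Proof.
move=> [he hm] [h1 [h2 [h3 [h4 [h5 [h6 h7]]]]]].
split; [|split; [|split; [|split; [|split; [|split]]]]].
- by move=> i j hij k a b /=; rewrite (h1 i j hij) he.
- by move=> k a b /=; rewrite h2 he.
- move=> i j k a b hd; have [e1 e2] := h3 i j k a b hd.
  by rewrite -!hm e1 e2 (klinN he).
- move=> i j a u hij; have [e1 e2] := h4 i j a u hij.
  by rewrite -!hm e1 e2 (klin0 he).
- by move=> i j a b hij; rewrite -hm h5 // (klin0 he).
- by move=> i j k a b hd; rewrite -hm h6.
- by move=> i j k a b hd; rewrite -hm h7.
Qed.

Lemma uniqS_e (K : comPzRingType) (R : algType K) (Q : lmodType K) (pi : R -> Q)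
  (S M : lmodType K) (brS : S -> S -> S) (brM : M -> M -> M)
  (Xs : 'I_3 -> 'I_3 -> R -> S) (iota : {ffun Uidx -> Q} -> S) (e g : S -> M) :
  is_stl3sharp pi brS Xs iota -> leibniz brM -> leibniz_hom brS brM e ->
  leibniz_hom brS brM g ->
  (forall i j a, i != j -> g (Xs i j a) = e (Xs i j a)) ->
  (forall u, g (iota u) = e (iota u)) -> forall x, g x = e x.
Proof.
move=> [_ [hr hu]] hM he hg h1 h2 x.
have [f [_ hf]] := hu M brM _ _ hM (transp_sharp he hr).
by rewrite (hf g hg h1 h2) (hf e he (fun _ _ _ _ => erefl) (fun _ => erefl)).
Qed.

Lemma transp_stl (K : comPzRingType) (R : algType K)
  (S M : lmodType K) (brS : S -> S -> S) (brM : M -> M -> M)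
  (Xs : 'I_3 -> 'I_3 -> R -> S) (e : S -> M) :
  leibniz_hom brS brM e -> stl_rels brS Xs ->
  stl_rels brM (fun i j a => e (Xs i j a)).
Proof.
move=> [he hm] [h1 [h2 [h3 h4]]].
split; [|split; [|split]].
- by move=> i j hij k a b /=; rewrite (h1 i j hij) he.
- by move=> i j k a b hd; rewrite -hm h2.
- by move=> i j k a b hd; rewrite -hm h3 // (klinN he).
- by move=> i j k l a b ? ? ? ?; rewrite -hm h4 // (klin0 he).
Qed.

Lemma uniqL_e (K : comPzRingType) (R : algType K)
  (S M : lmodType K) (brS : S -> S -> S) (brM : M -> M -> M)
  (Xs : 'I_3 -> 'I_3 -> R -> S) (e g : S -> M) :
  is_stl3 brS Xs -> leibniz brM -> leibniz_hom brS brM e ->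
  leibniz_hom brS brM g ->
  (forall i j a, i != j -> g (Xs i j a) = e (Xs i j a)) -> forall x, g x = e x.
Proof.
move=> [_ [hr hu]] hM he hg h1 x.
have [f [_ hf]] := hu M brM _ hM (transp_stl he hr).
by rewrite (hf g hg h1) (hf e he (fun _ _ _ _ => erefl)).
Qed.

Lemma pairE (A B : Type) (p q : A * B) : p.1 = q.1 -> p.2 = q.2 -> p = q.
Proof. by case: p q => [? ?] [? ?] /= -> ->. Qed.

Lemma hat_rels (K : comPzRingType) (R : algType K) (Q : lmodType K) (pi : R -> Q)
  (L : lmodType K) (brL : L -> L -> L) (X : 'I_3 -> 'I_3 -> R -> L)
  (psi : L -> L -> {ffun Uidx -> Q}) :
  is_stl3 brL X -> is_psi brL X pi psi ->
  stlsharp_rels pi (hatbr brL psi) (fun i j a => (0, X i j a)) (fun u => (u, 0)).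
Proof.
move=> [hLl [[x1 [x2 [x3 x4]]] _]] [hpb [p1 [p2 [p4 [pH pc]]]]].
have hLb := hLl.1.
split; [|split; [|split; [|split; [|split; [|split]]]]].
- move=> i j hij k a b; apply: pairE => /=; first by rewrite scaler0 addr0.
  exact: x1.
- by move=> k u v; apply: pairE => /=; rewrite ?scaler0 ?addr0.
- move=> i j k a b hd; have /and3P[hij hjk hik] := hd.
  have e1 := negbTE hij; have e2 := negbTE hjk; have e3 := negbTE hik.
  have e4 : (j == i) = false by rewrite eq_sym.
  have e5 : (k == j) = false by rewrite eq_sym.
  have e6 : (k == i) = false by rewrite eq_sym.
  rewrite /hatbr /=; split; apply: pairE => /=.
  + by apply: p4; rewrite ?e1 ?e2 ?e3 ?e4 ?e5 ?e6.
  + exact: x2.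
  + by rewrite oppr0; apply: p4; rewrite ?e1 ?e2 ?e3 ?e4 ?e5 ?e6.
  + by apply: x3; rewrite /distinct3 ?e1 ?e2 ?e3 ?e4 ?e5 ?e6.
- move=> i j a u hij; rewrite /hatbr /=; split; apply: pairE => /=.
  + exact: br0r hpb _.
  + exact: br0r hLb _.
  + exact: br0l hpb _.
  + exact: br0l hLb _.
- move=> i j a b hij; rewrite /hatbr /=; apply: pairE => /=.
  + by apply: p4 => //; rewrite !eqxx.
  + by apply: x4 => //; rewrite eq_sym.
- move=> i j k a b hd; have /and3P[hij hjk hik] := hd.
  rewrite /hatbr /=; apply: pairE => /=; first exact: p1.
  by apply: x4 => //; rewrite eq_sym.
- move=> i j k a b hd; have /and3P[hij hjk hik] := hd.
  rewrite /hatbr /=; apply: pairE => /=; first exact: p2.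
  by apply: x4 => //; rewrite eq_sym.
Qed.

Definition o0 : 'I_3 := @Ordinal 3 0 isT.
Definition o1 : 'I_3 := @Ordinal 3 1 isT.
Definition o2 : 'I_3 := @Ordinal 3 2 isT.
Lemma I3cases (i : 'I_3) : [\/ i = o0, i = o1 | i = o2].
Proof.
case: i => [[|[|[|n]]] Hi].
- by apply: Or31; apply: val_inj.
- by apply: Or32; apply: val_inj.
- by apply: Or33; apply: val_inj.
- by [].
Qed.

Lemma br_suml (K : comPzRingType) (V W : lmodType K) (br : V -> V -> W) :
  kbilinear br -> forall (I : Type) (s : seq I) (F : I -> V) z,
  br (\sum_(i <- s) F i) z = \sum_(i <- s) br (F i) z.
Proof. by move=> hb I s F z; exact (klin_sum (bil_l hb z) s F). Qed.

Definition brmod (K : comPzRingType) (S L Q : lmodType K) (brS : S -> S -> S)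
  (psi : L -> L -> {ffun Uidx -> Q}) (iota : {ffun Uidx -> Q} -> S)
  (rho : S -> ({ffun Uidx -> Q} * L)%type) (x y : S) : S :=
  brS x y - iota (psi (rho x).2 (rho y).2).

Unset Implicit Arguments. Set Strict Implicit.

Theorem lemma4p3 (K : comPzRingType) (R : algType K) (hR : free_with_one R)
  (Q : lmodType K) (pi : R -> Q) (hQ : is_R3 pi)
  (L : lmodType K) (brL : L -> L -> L) (X : 'I_3 -> 'I_3 -> R -> L)
  (hL : is_stl3 brL X)
  (psi : L -> L -> {ffun Uidx -> Q}) (hpsi : is_psi brL X pi psi)
  (S : lmodType K) (brS : S -> S -> S) (Xs : 'I_3 -> 'I_3 -> R -> S)
  (iota : {ffun Uidx -> Q} -> S) (hS : is_stl3sharp pi brS Xs iota) :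
  exists rho : S -> ({ffun Uidx -> Q} * L)%type,
    rho_spec brL X psi brS Xs iota rho /\
    (forall rho', rho_spec brL X psi brS Xs iota rho' -> forall x, rho' x = rho x) /\
    bijective rho.
Proof.
have [hSl [hSr hSu]] := hS.
have [hX1 [hi1 [h3 [h4 [h5 [h6 h7]]]]]] := hSr.
have hLl := hL.1.
have hSb := hSl.1.
have [hpb [p1 [p2 [p4 [pH pc]]]]] := hpsi.
have hatL : leibniz (hatbr brL psi) := hat_leib hLl hpb pc.
have hrels := hat_rels hL hpsi.
have [rho [[rhom [rhoX rhoi]] rhou]] := hSu _ _ _ _ hatL hrels.
exists rho; split; first by split; [exact: rhom | split].
split; first by move=> rho' [r1 [r2 r3]] x; exact: rhou rho' r1 r2 r3 x.
have C1 : forall a m, exists i j i' j', [/\ i != j, i' != j' &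
    iota (unitU pi a m) = brS (Xs i j a) (Xs i' j' 1)].
  move=> a [[] i]; case: (I3cases i) => ->.
  - by exists o0, o1, o0, o2; rewrite (h6 o0 o1 o2) // mulr1.
  - by exists o1, o0, o1, o2; rewrite (h6 o1 o0 o2) // mulr1.
  - by exists o2, o0, o2, o1; rewrite (h6 o2 o0 o1) // mulr1.
  - by exists o1, o0, o2, o0; rewrite (h7 o1 o0 o2) // mulr1.
  - by exists o0, o1, o2, o1; rewrite (h7 o0 o1 o2) // mulr1.
  - by exists o0, o2, o1, o2; rewrite (h7 o0 o2 o1) // mulr1.
have C2 : forall u v, brS (iota u) (iota v) = 0.
  move=> u v.
  have -> : u = \sum_(m : Uidx) [ffun p => if p == m then u m else 0].
    apply/ffunP => p; rewrite sum_ffunE (bigD1 p) //= ffunE eqxx big1 ?addr0 //.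
    by move=> m hm; rewrite ffunE eq_sym (negbTE hm).
  rewrite (klin_sum hi1) (br_suml hSb) big1 // => m _.
  have [a ha] := hQ.2.1 (u m).
  have -> : [ffun p => if p == m then u m else 0] = unitU pi a m by rewrite /unitU ha.
  have [i [j [i' [j' [hij hij' ->]]]]] := C1 a m.
  by rewrite (leibA hSl) (h4 _ _ _ _ hij').1 (h4 _ _ _ _ hij).1 (br0r hSb) (br0l hSb) addr0.
have Cr : forall u x, brS x (iota u) = 0.
  move=> u x.
  have hM := rbr_leib hSl.
  have he : leibniz_hom brS (rbr brS) (fun x => (x, 0)).
    split.
    - by move=> k y z; apply: pairE => //=; rewrite scaler0 addr0.
    - by move=> y z; apply: pairE => //=; rewrite (br0l hSb) (br0r hSb) addr0.
  have hg : leibniz_hom brS (rbr brS) (fun x => (x, brS x (iota u))).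
    split.
    - by move=> k y z; apply: pairE => //=; rewrite hSb.1.
    - by move=> y z; apply: pairE => //=; rewrite (leibA hSl) addrC.
  have h : forall x, (x, brS x (iota u)) = (x, 0).
    apply: (uniqS_e hS hM he hg).
    - by move=> i j a hij; rewrite (h4 _ _ _ _ hij).1.
    - by move=> v; rewrite C2.
  by have /(congr1 snd) := h x.
have Cl : forall u x, brS (iota u) x = 0.
  move=> u x.
  have hM := lbr_leib hSl.
  have he : leibniz_hom brS (lbr brS) (fun x => (x, 0)).
    split.
    - by move=> k y z; apply: pairE => //=; rewrite scaler0 addr0.
    - by move=> y z; apply: pairE => //=; rewrite !(br0l hSb) subrr.
  have hg : leibniz_hom brS (lbr brS) (fun x => (x, brS (iota u) x)).
    split.
    - by move=> k y z; apply: pairE => //=; rewrite hSb.2.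
    - by move=> y z; apply: pairE => //=; rewrite hSl.2.
  have h : forall x, (x, brS (iota u) x) = (x, 0).
    apply: (uniqS_e hS hM he hg).
    - by move=> i j a hij; rewrite (h4 _ _ _ _ hij).2.
    - by move=> v; rewrite C2.
  by have /(congr1 snd) := h x.
pose bm := brmod brS psi iota rho.
have rlin := rhom.1.
have rhoD : forall x y, rho (x - y) = rho x - rho y := klinB rlin.
have rho_bm : forall x y, rho (brS x y - iota (psi (rho x).2 (rho y).2)) = (0, brL (rho x).2 (rho y).2).
  move=> x y; rewrite rhoD rhom.2 rhoi.
  by apply: pairE => /=; rewrite ?subrr ?subr0.
have bmL : leibniz bm.
  split; first split.
  - move=> k x y z; rewrite /bm /brmod hSb.1 rlin /= hpb.1 hi1.
    by rewrite scalerBr zid2.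
  - move=> k x y z; rewrite /bm /brmod hSb.2 rlin /= hpb.2 hi1.
    by rewrite scalerBr zid2.
  - move=> x y z; rewrite /bm /brmod !rho_bm /=.
    rewrite (brBr hSb) (brBl hSb) (brBl hSb) !Cr !Cl !subr0.
    rewrite (hSl.2 x y z) (pc (rho x).2 (rho y).2 (rho z).2) (klinB hi1).
    exact: zid4.
have bmR : stl_rels bm Xs.
  split; [exact: hX1|split; [|split]].
  - move=> i j k a b hd; have /and3P[hij hjk hik] := hd.
    have e1 : ~~ ((i == j) && (j != k)) by rewrite (negbTE hij).
    have e2 : ~~ ((j == k) && (i != j)) by rewrite (negbTE hjk).
    by rewrite /bm /brmod (h3 i j k a b hd).1 !rhoX // /= (p4 _ _ _ _ _ _ hij hjk e1 e2) (klin0 hi1) subr0.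
  - move=> i j k a b hd; have /and3P[hij hjk hik] := hd.
    have hd' : distinct3 k i j by rewrite /distinct3 hij (eq_sym k i) hik (eq_sym k j) hjk.
    have e1 : ~~ ((i == k) && (j != i)) by rewrite (negbTE hik).
    have e2 : ~~ ((j == i) && (i != k)) by rewrite eq_sym (negbTE hij).
    have hki : k != i by rewrite eq_sym.
    by rewrite /bm /brmod (h3 k i j b a hd').2 !rhoX // /= (p4 _ _ _ _ _ _ hij hki e1 e2) (klin0 hi1) subr0.
  - move=> i j k l a b hij hkl hjk hil.
    rewrite /bm /brmod !rhoX //=.
    case: (eqVneq i k) => [<-|hik]; case: (eqVneq j l) => [<-|hjl].
    + by rewrite h5 // p4 ?eqxx // (klin0 hi1) subrr.
    + have hd : distinct3 i j l by rewrite /distinct3 hij hjl.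
      by rewrite (h6 _ _ _ _ _ hd) (p1 _ _ _ _ _ hd) subrr.
    + have hd : distinct3 i j k by rewrite /distinct3 hij hjk.
      by rewrite (h7 _ _ _ _ _ hd) (p2 _ _ _ _ _ hd) subrr.
    + exfalso; apply: (@I3_4 i j k l hij); by rewrite // eq_sym.
have [phi [[phim phiX] _]] := hL.2.2 S bm Xs bmL bmR.
have plin := phim.1.
have z0b : kbilinear (fun _ _ : L => (0 : {ffun Uidx -> Q})).
  by split=> *; rewrite scaler0 addr0.
have hat0 : leibniz (hatbr brL (fun _ _ : L => (0 : {ffun Uidx -> Q}))).
  by apply: hat_leib => // *; rewrite subrr.
have hrf : forall x, rho (phi x) = (0, x).
  apply: (uniqL_e hL hat0).
  - split.
    + by move=> k x y; apply: pairE => //=; rewrite scaler0 addr0.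
    + by [].
  - split.
    + by move=> k x y /=; rewrite plin rlin.
    + by move=> x y /=; rewrite phim.2 /bm /brmod rho_bm.
  - by move=> i j a hij /=; rewrite phiX // rhoX.
pose sigma := fun p : ({ffun Uidx -> Q} * L)%type => iota p.1 + phi p.2.
have hsr : forall p, rho (sigma p) = p.
  move=> [u x]; rewrite /sigma /= (klinD rlin) rhoi hrf.
  by apply: pairE => /=; rewrite ?addr0 ?add0r.
have hrs : forall x, sigma (rho x) = x.
  apply: (uniqS_e hS hSl (e := id)).
  - by split.
  - split.
    + move=> k x y; rewrite /sigma rlin /= hi1 plin.
      by rewrite scalerDr addrACA.
    + move=> x y; rewrite /sigma rhom.2 /hatbr /= phim.2 /bm /brmod !hrf /=.
      rewrite addrC subrK (brDl hSb) !(brDr hSb) !Cl !Cr !add0r.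
      by [].
  - by move=> i j a hij; rewrite /sigma rhoX //= (klin0 hi1) phiX // add0r.
  - by move=> u; rewrite /sigma rhoi /= (klin0 plin) addr0.
by exists sigma.
Qed.
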